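(* The mechanism RandPoly is a universally truthful mechanism without money and with verification for CAs with unknown $k$-minded bidders (single supply), and it achieves an expected approximation ratio of $O(\sqrt m)$ (specifically at most $2(\sqrt m+1)$).
   Context: Combinatorial auction with a set $\mathsf U$ of $m$ goods (single copy each) and $n$ bidders. True type of bidder $i$: $t_i=(v_i,\mathcal S_i)$ with $\mathcal S_i$ a private collection of $k$ nonempty subsets of $\mathsf U$ and $v_i:\mathcal S_i\to\mathbb R_{\ge0}$ private, extended by $v_i(T)=\max\{v_i(S'):S'\in\mathcal S_i,S'\subseteq T\}$ ($0$ if none). Greedy algorithm: list elementary bids $(i,S,w_i(S))$ with $w_i(S)>0$ in non-increasing order of value (ties in favour of smaller bidder index); accept a bid (allocate $S$ to $i$) iff $i$ has no set yet and $S$ is disjoint from all accepted sets. RandPoly: let $v_{\max}$ be the largest declared value of any demanded set and $S_{\max}$ a set of that value (ties broken in a bid-independent way); with probability $1/2$ allocate only $S_{\max}$ to its bidder; with probability $1/2$ output the greedy allocation computed on the subinstance consisting only of the bids $(i,S,w_i(S))$ with $|S|\le\sqrt m$. Verification: bidder $i$ with true type $t_i$ facing $\mathbf b_{-i}$ may declare $b_i=(z,\mathcal T)$ only if $z(A_i(b_i,\mathbf b_{-i}))\le v_i(A_i(b_i,\mathbf b_{-i}))$. A deterministic mechanism is truthful without money and with verification if for all $i$, $\mathbf b_{-i}$, true $t_i$ and permitted $b_i$, $v_i(A_i(t_i,\mathbf b_{-i}))\ge v_i(A_i(b_i,\mathbf b_{-i}))$; universally truthful means a probability distribution over such deterministic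 mechanisms. Approximation ratio $\alpha$: on truthful input, expected social welfare $\ge\mathrm{OPT}/\alpha$. *)

(* Defs.v *)
From Stdlib Require List.
From HB Require Import structures.
From mathcomp Require Import all_boot all_order all_algebra.
Set Implicit Arguments. Unset Strict Implicit. Unset Printing Implicit Defensive.
Import Order.TTheory GRing.Theory Num.Theory.
Local Open Scope ring_scope.

Section Auction.
Variables (R : rcfType) (U : finType) (n : nat).

(* A (true or declared) type of a bidder: a collection of demanded sets
   together with a value for each of them (values outside the collection
   are irrelevant). *)
Record btype := BType { bval : {set U} -> R ; bcoll : {set {set U}} }.

Definition valid_type (k : nat) (t : btype) : Prop :=
  #|bcoll t| = k /\
  (forall S, S \in bcoll t -> S != set0) /\
  (forall S, S \in bcoll t -> 0 <= bval t S).

Definition ext_val (t : btype) (T : {set U}) : R :=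
  \big[Num.max/0]_(S in bcoll t | S \subset T) bval t S.

Definition profile := 'I_n -> btype.

Definition upd (b : profile) (i : 'I_n) (bi : btype) : profile :=
  fun j => if j == i then bi else b j.

Definition allocation := 'I_n -> {set U}.
Definition mechanism := profile -> allocation.

Definition feasible (a : allocation) : bool :=
  [forall i, forall j, (i != j) ==> [disjoint a i & a j]].

Definition welfare (t : profile) (a : allocation) : R :=
  \sum_(i < n) ext_val (t i) (a i).

Definition OPT (t : profile) : R :=
  \big[Num.max/0]_(a : {ffun 'I_n -> {set U}} | feasible a) welfare t a.

(* an elementary bid (i, S); its value is bval (b i) S *)
Definition ebid := ('I_n * {set U})%type.

Definition ebids (b : profile) : seq ebid :=
  [seq (i, X) | i <- enum 'I_n, X <- enum (bcoll (b i))].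

(* fixed, bid-independent order on sets used to break remaining ties *)
Definition set_rank (S : {set U}) : nat := enum_rank S.

Definition ebid_le (b : profile) (e1 e2 : ebid) : bool :=
  let w1 := bval (b e1.1) e1.2 in let w2 := bval (b e2.1) e2.2 in
  (w2 < w1) ||
  ((w1 == w2) &&
   ((nat_of_ord e1.1 < nat_of_ord e2.1)%N ||
    ((e1.1 == e2.1) && (set_rank e1.2 <= set_rank e2.2)%N))).

Definition sorted_ebids (b : profile) : seq ebid := sort (ebid_le b) (ebids b).

Definition greedy_step (acc : seq ebid) (e : ebid) : seq ebid :=
  if all (fun p : ebid => (p.1 != e.1) && [disjoint p.2 & e.2]) acc
  then rcons acc e else acc.

Definition alloc_of (acc : seq ebid) : allocation :=
  fun i => \bigcup_(p <- acc | p.1 == i) p.2.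

Definition greedy_on (keep : ebid -> bool) (b : profile) : allocation :=
  alloc_of (foldl greedy_step [::]
    [seq e <- sorted_ebids b | (0 < bval (b e.1) e.2) && keep e]).

(* subinstance of bids with |S| <= sqrt m, i.e. |S|^2 <= m (|S| a natural) *)
Definition small (e : ebid) : bool := (#|e.2| * #|e.2| <= #|U|)%N.

Definition M_greedy_small : mechanism := greedy_on small.

(* allocate only S_max (a demanded set of maximum declared value, ties broken
   by the fixed bid-independent order) to its bidder *)
Definition M_max : mechanism := fun b =>
  match sorted_ebids b with
  | [::] => fun _ => set0
  | e :: _ => fun i => if i == e.1 then e.2 else set0
  end.

Definition truthful_verif (k : nat) (M : mechanism) : Prop :=
  forall (i : 'I_n) (b : profile) (ti bi : btype),
    (forall j, valid_type k (b j)) -> valid_type k ti -> valid_type k bi ->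
    (* verification: bi is a permitted declaration *)
    ext_val bi (M (upd b i bi) i) <= ext_val ti (M (upd b i bi) i) ->
    ext_val ti (M (upd b i bi) i) <= ext_val ti (M (upd b i ti) i).

(* randomized mechanism = finite probability distribution over
   deterministic mechanisms *)
Definition rmechanism := seq (R * mechanism).

Definition is_distribution (D : rmechanism) : Prop :=
  (forall p, p \in map fst D -> 0 <= p) /\ \sum_(p <- map fst D) p = 1.

Definition universally_truthful (k : nat) (D : rmechanism) : Prop :=
  is_distribution D /\ forall pM, List.In pM D -> truthful_verif k pM.2.

Definition expected_welfare (D : rmechanism) (t : profile) : R :=
  \sum_(pM <- D) pM.1 * welfare t (pM.2 t).

Definition RandPoly : rmechanism :=
  [:: (2^-1, M_max); (2^-1, M_greedy_small)].

End Auction.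

(* Main.v *)
Require Import Defs.
From HB Require Import structures.
From mathcomp Require Import all_boot all_order all_algebra.
From mathcomp Require Import ring lra.
Set Implicit Arguments. Unset Strict Implicit. Unset Printing Implicit Defensive.
Import Order.TTheory GRing.Theory Num.Theory.

Section Aux.
Local Open Scope ring_scope.
Variables (R : rcfType) (U : finType) (n : nat).
Implicit Types (b : profile R U n) (e : ebid U n).

Definition bidval b e := bval (b e.1) e.2.

Lemma set_rank_inj : injective (@set_rank U).
Proof. by move=> x y h; apply: enum_rank_inj; apply: ord_inj. Qed.

Lemma ebid_le_refl b : reflexive (ebid_le b).
Proof. by move=> e; rewrite /ebid_le !eqxx leqnn /= ltnn !orbT. Qed.

Lemma ebid_le_total b : total (ebid_le b).
Proof.
move=> [i X] [j Y]; rewrite /ebid_le /=.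
set w1 := bval _ X; set w2 := bval _ Y.
case: (ltgtP w1 w2) => [h|h|h]; rewrite ?h ?orbT //=.
case: (ltngtP i j) => hij; rewrite ?hij ?orbT //.
have -> : i = j by apply: ord_inj.
by rewrite eqxx /= ?ltnn /= leq_total.
Qed.

Lemma ebid_le_trans b : transitive (ebid_le b).
Proof.
move=> [j Y] [i X] [k Z]; rewrite /ebid_le /=.
set w1 := bval _ X; set w2 := bval _ Y; set w3 := bval _ Z.
move=> /orP[h12|/andP[/eqP h12 h12']] /orP[h23|/andP[/eqP h23 h23']].
- by rewrite (lt_trans h23 h12).
- by rewrite -h23 h12.
- by rewrite h12 h23.
rewrite h12 h23 eqxx ltxx /=; apply/orP.
move: h12' h23' => /orP[a|/andP[/eqP a a']] /orP[c|/andP[/eqP c c']].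
- by left; apply: ltn_trans a c.
- by left; rewrite -c.
- by left; rewrite a.
by right; rewrite a c eqxx /=; apply: leq_trans a' c'.
Qed.

Lemma ebid_le_anti b : antisymmetric (ebid_le b).
Proof.
move=> [i X] [j Y]; rewrite /ebid_le /=.
set w1 := bval _ X; set w2 := bval _ Y.
case: (ltgtP w1 w2) => //= _.
case: (ltngtP i j) => //= hij.
- by move=> /andP[/eqP ji]; rewrite ji ltnn in hij.
- by move=> /andP[/andP[/eqP ji]]; rewrite ji ltnn in hij.
have eij : i = j by apply: ord_inj.
by rewrite eij eqxx /= => /anti_leq /set_rank_inj ->.
Qed.

Lemma ebid_le_val b e1 e2 : ebid_le b e1 e2 -> bidval b e2 <= bidval b e1.
Proof.
rewrite /ebid_le /bidval => /orP[/ltW //|/andP[/eqP -> _]] //.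
Qed.

End Aux.

Section Greedy.
Variables (U : finType) (n : nat).
Local Notation eb := (ebid U n).
Local Notation gstep := (@greedy_step U n).
Implicit Types (e p : eb) (acc s : seq eb).

Definition noconf (p e : eb) : bool := (p.1 != e.1) && [disjoint p.2 & e.2].

Lemma stepE acc e : gstep acc e =
  if all (noconf^~ e) acc then rcons acc e else acc.
Proof. by []. Qed.

Lemma noconf_sym p e : noconf p e = noconf e p.
Proof. by rewrite /noconf eq_sym disjoint_sym. Qed.

Lemma noconf_irr e : noconf e e = false.
Proof. by rewrite /noconf eqxx. Qed.

Lemma step_sub acc e : {subset acc <= gstep acc e}.
Proof. by move=> x; rewrite stepE; case: ifP => // _; rewrite mem_rcons inE orbC => ->. Qed.

Lemma foldl_prefix acc s : {subset acc <= foldl gstep acc s}.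
Proof.
elim: s acc => [|x s IH] acc y hy //=; apply: IH; exact: step_sub.
Qed.

Lemma foldl_sub acc s : {subset foldl gstep acc s <= acc ++ s}.
Proof.
elim: s acc => [|x s IH] acc y /=; first by rewrite cats0.
move=> /IH; rewrite !mem_cat inE stepE; case: ifP => _; last first.
  by case/orP=> ->; rewrite ?orbT.
rewrite mem_rcons inE; case/orP => [/orP[->|->]|->]; by rewrite ?orbT.
Qed.

Lemma foldl_pairwise acc s : pairwise noconf acc ->
  pairwise noconf (foldl gstep acc s).
Proof.
elim: s acc => //= x s IH acc h; apply: IH; rewrite stepE; case: ifP => // hall.
by rewrite pairwise_rcons hall.
Qed.

Lemma charging (r : rel eb) acc s e :
  transitive r -> reflexive r -> sorted r s ->
  (forall q x, q \in acc -> x \in s -> r q x) -> e \in s ->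
  exists2 p, p \in foldl gstep acc s & ~~ noconf p e && r p e.
Proof.
move=> rt rr; elim: s acc => //= x s IH acc hs hacc.
rewrite inE => /orP[/eqP ->|hes].
  rewrite stepE; case: ifP => hall.
    exists x; last by rewrite noconf_irr rr.
    by apply: foldl_prefix; rewrite mem_rcons mem_head.
  move/negbT: hall; rewrite -has_predC => /hasP[q hq /= hqx].
  exists q; first exact: foldl_prefix.
  by rewrite hqx /= hacc // mem_head.
apply: IH => //; first exact: path_sorted hs.
move=> q y hq hy; move: hq; rewrite stepE; case: ifP => _ hq.
  move: hq; rewrite mem_rcons inE => /orP[/eqP ->|hq].
    by move: (order_path_min rt hs) => /allP; apply.
  by apply: hacc; rewrite // inE hy orbT.
by apply: hacc; rewrite // inE hy orbT.
Qed.

Lemma acc_mem acc s e : e \in foldl gstep acc s ->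
  e \in acc \/ exists s1 s2, s = s1 ++ e :: s2 /\
     all (noconf^~ e) (foldl gstep acc s1).
Proof.
elim: s acc => [|x s IH] acc /=; first by left.
move=> /IH [h|[s1 [s2 [-> h]]]]; last first.
  by right; exists (x :: s1), s2.
move: h; rewrite stepE; case: ifP => hall // h; last by left.
move: h; rewrite mem_rcons inE => /orP[/eqP ->|h]; last by left.
by right; exists [::], s.
Qed.

Lemma acc_intro acc s1 s2 e : all (noconf^~ e) (foldl gstep acc s1) ->
  e \in foldl gstep acc (s1 ++ e :: s2).
Proof.
move=> h; rewrite foldl_cat /=; apply: foldl_prefix.
by rewrite stepE h mem_rcons mem_head.
Qed.

Lemma foldl_skip (i : 'I_n) acc s :
  all (fun p : eb => p.1 != i) (foldl gstep acc s) ->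
  foldl gstep acc s = foldl gstep acc [seq e <- s | e.1 != i].
Proof.
elim: s acc => //= x s IH acc h.
case: ifP => hx /=; first by rewrite IH.
move: h; rewrite stepE; case: ifP => _ h; last by rewrite IH.
have : x \in foldl gstep (rcons acc x) s.
  by apply: foldl_prefix; rewrite mem_rcons mem_head.
by move: h => /allP h /h; rewrite hx.
Qed.

End Greedy.

Section Sorted.
Variables (T : eqType) (r : rel T).
Hypotheses (rt : transitive r) (rr : reflexive r) (ra : antisymmetric r).

Lemma filter_nil_all (a : pred T) s : all (predC a) s -> filter a s = [::].
Proof.
move=> h; apply/eqP; rewrite -[_ == _]negbK -has_filter -all_predC; exact: h.
Qed.

Lemma sorted_split e s : sorted r s ->
  s = [seq x <- s | ~~ r e x] ++ [seq x <- s | r e x].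
Proof.
elim: s => //= x s IH hs.
have hs' := path_sorted hs.
case: (boolP (r e x)) => hex /=; rewrite ?hex /=; last by rewrite -IH.
  have hall : all (r e) s.
    by apply/allP=> y hy; apply: (rt hex); move/allP: (order_path_min rt hs); apply.
  rewrite filter_nil_all; last by apply/allP => y /(allP hall) /= ->.
  by rewrite (all_filterP hall).
Qed.

Lemma sorted_head_min h s : sorted r (h :: s) -> forall x, x \in h :: s -> r h x.
Proof.
move=> hs x; rewrite inE => /orP[/eqP ->|hx]; first exact: rr.
by move/allP: (order_path_min rt hs); apply.
Qed.

Lemma sorted_before s1 s2 e x : sorted r (s1 ++ e :: s2) -> x \in s1 -> r x e.
Proof.
move=> hs hx; move: hs; case/splitPr: hx => a b; rewrite -catA cat_cons.
move/cat_sorted2=> [_ /= hp].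
by move/allP: (order_path_min rt hp); apply; rewrite mem_cat mem_head orbT.
Qed.

Lemma sorted_prefix s1 s2 e : sorted r (s1 ++ e :: s2) -> uniq (s1 ++ e :: s2) ->
  s1 = [seq x <- s1 ++ e :: s2 | ~~ r e x].
Proof.
move=> hs hu; rewrite filter_cat /= rr /=.
have hp : path r e s2 by move: hs; rewrite sorted_cat_cons => /andP[].
rewrite (@filter_nil_all _ s2); last first.
  by apply/allP => y /(allP (order_path_min rt hp)) /= ->.
rewrite cats0; apply/esym/all_filterP/allP => x hx /=.
apply/negP => hex.
have hxe := sorted_before hs hx.
have exe : x = e by apply: ra; rewrite hxe hex.
move: hu; rewrite cat_uniq /= => /and3P[_ /norP[/negP hh _] _].
by apply: hh; rewrite -exe.
Qed.

End Sorted.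

Section Ebids.
Local Open Scope ring_scope.
Variables (R : rcfType) (U : finType) (n : nat).
Implicit Types (b c : profile R U n).

Lemma mem_ebids b (j : 'I_n) X : ((j, X) \in ebids b) = (X \in bcoll (b j)).
Proof.
apply/allpairsPdep/idP => [[j' [X' [_ hX [-> ->]]]]|hX].
  by rewrite mem_enum in hX.
by exists j, X; rewrite mem_enum mem_enum.
Qed.

Lemma uniq_ebids b : uniq (ebids b).
Proof.
apply: allpairs_uniq_dep; first exact: enum_uniq.
  by move=> j _; apply: enum_uniq.
by move=> [x1 x2] [y1 y2] _ _ /= [e1]; move: x2 y2; rewrite e1 => ?? ->.
Qed.

Lemma ebids_others b c (i : 'I_n) : (forall j, j != i -> c j = b j) ->
  [seq e <- ebids c | e.1 != i] = [seq e <- ebids b | e.1 != i].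
Proof.
move=> hcb; rewrite /ebids; elim: (enum 'I_n) => //= j js IH.
rewrite !filter_cat IH; congr (_ ++ _).
case: (boolP (j == i)) => hj; last by rewrite hcb.
rewrite !filter_nil_all //; apply/allP => x /mapP [X _ ->] /=; by rewrite hj.
Qed.

End Ebids.

Section MaxAux.
Local Open Scope ring_scope.
Lemma maxl' (R : rcfType) (x y : R) : y <= x -> Num.max x y = x.
Proof. move=> h; exact: max_l h. Qed.
Lemma maxr' (R : rcfType) (x y : R) : x <= y -> Num.max x y = y.
Proof. move=> h; exact: max_r h. Qed.
End MaxAux.


Section BigMax.
Local Open Scope ring_scope.
Variables (R : rcfType) (I : eqType).

Lemma bigmax_ge (r : seq I) (P : pred I) (F : I -> R) x :
  x \in r -> P x -> F x <= \big[Num.max/0]_(i <- r | P i) F i.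
Proof.
elim: r => //= y r IH; rewrite inE big_cons => /orP[/eqP <-|hx] hP.
  by rewrite hP le_max lexx.
case: ifP => _; last exact: IH.
by rewrite le_max IH ?orbT.
Qed.

Lemma bigmax_ge0 (r : seq I) (P : pred I) (F : I -> R) :
  0 <= \big[Num.max/0]_(i <- r | P i) F i.
Proof. by elim/big_rec: _ => // i x _ hx; rewrite le_max hx orbT. Qed.

Lemma bigmax_le (r : seq I) (P : pred I) (F : I -> R) c :
  0 <= c -> (forall i, P i -> F i <= c) ->
  \big[Num.max/0]_(i <- r | P i) F i <= c.
Proof. by move=> h0 h; elim/big_ind: _ => // x y hx hy; rewrite ge_max hx hy. Qed.

Lemma bigmax_attained (r : seq I) (P : pred I) (F : I -> R) :
  \big[Num.max/0]_(i <- r | P i) F i = 0 \/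
  exists2 i, (i \in r) && P i & \big[Num.max/0]_(i <- r | P i) F i = F i.
Proof.
elim: r => [|y r IH]; first by left; rewrite big_nil.
rewrite big_cons; case: ifP => hP; last first.
  case: IH => [->|[i /andP[hi hPi] ->]]; first by left.
  by right; exists i; rewrite // inE hi orbT.
case: IH => [h0|[i /andP[hi hPi] hi']].
  rewrite h0; case: (leP 0 (F y)) => h.
    by right; exists y; rewrite ?inE ?eqxx ?hP // ?maxl'.
  by left.
rewrite hi'; case: (leP (F i) (F y)) => h.
  by right; exists y; rewrite ?inE ?eqxx ?hP // ?maxl'.
right; exists i; first by rewrite inE hi hPi orbT.
by rewrite ?maxr' // ltW.
Qed.

End BigMax.

Section Ext.
Local Open Scope ring_scope.
Variables (R : rcfType) (U : finType) (n : nat).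
Implicit Types (t : btype R U) (b : profile R U n) (T S : {set U}).

Lemma ext_val_ge0 t T : 0 <= ext_val t T.
Proof. exact: bigmax_ge0. Qed.

Lemma ext_val_ge t T S : S \in bcoll t -> S \subset T -> bval t S <= ext_val t T.
Proof. by move=> h1 h2; apply: bigmax_ge; rewrite ?mem_index_enum // h1. Qed.

Lemma ext_val_mono t T T' : T \subset T' -> ext_val t T <= ext_val t T'.
Proof.
move=> hT; apply: bigmax_le; first exact: ext_val_ge0.
by move=> S /andP[h1 h2]; apply: ext_val_ge => //; apply: subset_trans hT.
Qed.

Lemma ext_val_attained t T : ext_val t T = 0 \/
  exists2 S, (S \in bcoll t) && (S \subset T) & ext_val t T = bval t S.
Proof.
case: (bigmax_attained (index_enum {set U}) (fun S => (S \in bcoll t) && (S \subset T)) (bval t))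
  => [h|[S /andP[_ h] e]]; [by left | by right; exists S].
Qed.

Lemma upd_same b i x : upd b i x i = x.
Proof. by rewrite /upd eqxx. Qed.

Lemma upd_other b i x j : j != i -> upd b i x j = b j.
Proof. by rewrite /upd => /negPf ->. Qed.

Lemma alloc_of_mem (A : seq (ebid U n)) p :
  pairwise (@noconf U n) A -> p \in A -> alloc_of A p.1 = p.2.
Proof.
move=> hpw hp.
suff h : [seq q <- A | q.1 == p.1] = [:: p].
  by rewrite /alloc_of -big_filter h big_seq1.
elim: A hpw hp => //= x A IH /andP[hx hpw]; rewrite inE.
case: (eqVneq p x) => [e _|hne /= hp].
  rewrite e eqxx filter_nil_all //; apply/allP => y /(allP hx).
  by rewrite /noconf => /andP[hh _] /=; rewrite eq_sym.
have /andP[hxp _] := allP hx p hp; rewrite (negPf hxp); exact: IH.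
Qed.

Lemma alloc_of_none (A : seq (ebid U n)) i :
  ~~ has (fun q : ebid U n => q.1 == i) A -> alloc_of A i = set0.
Proof.
move=> h; rewrite /alloc_of big_hasC //.
Qed.

End Ext.

Section SG.
Local Open Scope ring_scope.
Variables (R : rcfType) (U : finType) (n : nat).
Implicit Types (b c : profile R U n).
Local Notation eb := (ebid U n).
Local Notation gstep := (@greedy_step U n).

Definition Kp b (e : eb) : bool := (0 < bval (b e.1) e.2) && small e.
Definition sG b := [seq e <- sorted_ebids b | Kp b e].

Lemma greedyE b : M_greedy_small b = alloc_of (foldl gstep [::] (sG b)).
Proof. by []. Qed.

Lemma sG_sorted b : sorted (ebid_le b) (sG b).
Proof.
apply: (sorted_filter (@ebid_le_trans _ _ _ b)).
exact: (sort_sorted (@ebid_le_total _ _ _ b)).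
Qed.

Lemma sG_uniq b : uniq (sG b).
Proof. by rewrite filter_uniq // sort_uniq uniq_ebids. Qed.

Lemma mem_sG b e : (e \in sG b) = (e \in ebids b) && Kp b e.
Proof. by rewrite mem_filter mem_sort andbC. Qed.

Lemma filter_swap (T : Type) (a1 a2 : pred T) s :
  filter a1 (filter a2 s) = filter a2 (filter a1 s).
Proof. by rewrite -!filter_predI; apply: eq_filter => x /=; rewrite andbC. Qed.

Lemma others_sG b c (i : 'I_n) : (forall j, j != i -> c j = b j) ->
  [seq e <- sG c | e.1 != i] =
  sort (ebid_le b) [seq e <- [seq e <- ebids b | e.1 != i] | Kp b e].
Proof.
move=> hcb.
have hK : {in [seq e <- ebids b | e.1 != i], Kp c =1 Kp b}.
  by move=> x; rewrite mem_filter => /andP[hx _]; rewrite /Kp hcb.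
rewrite /sG /sorted_ebids -filter_predI filter_sort; last exact: ebid_le_trans.
  2: exact: ebid_le_total.
rewrite filter_predI filter_swap (ebids_others hcb) (eq_in_filter hK).
set L := filter _ _.
have hL : all (fun e : eb => e.1 != i) L.
  by apply/allP => x; rewrite /L !mem_filter => /and3P[].
apply: (sorted_eq (@ebid_le_trans _ _ _ b) (@ebid_le_anti _ _ _ b)).
- rewrite -(@eq_in_sorted _ (fun e : eb => e.1 != i) (ebid_le c)).
  + apply: sort_sorted; exact: ebid_le_total.
  + by move=> x y hx hy; rewrite /ebid_le !hcb.
  + by apply/allP => x; rewrite mem_sort => /(allP hL).
- apply: sort_sorted; exact: ebid_le_total.
- by rewrite perm_sort perm_sym perm_sort.
Qed.

Lemma filter_prefix (T : eqType) (r : rel T) (e : T) (P2 : pred T) o :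
  transitive r -> sorted r o -> {in o, forall x, ~~ r e x -> P2 x} ->
  exists rest, filter P2 o = [seq x <- o | ~~ r e x] ++ rest.
Proof.
move=> rt hs h; exists [seq x <- filter P2 o | r e x].
rewrite {1}(sorted_split rt e (sorted_filter rt P2 hs)) filter_swap.
congr (_ ++ _); apply/all_filterP/allP => x; rewrite mem_filter => /andP[h1 h2].
exact: h.
Qed.

End SG.

Section TG.
Local Open Scope ring_scope.
Variables (R : rcfType) (U : finType) (n : nat).
Local Notation eb := (ebid U n).
Local Notation gstep := (@greedy_step U n).

Lemma truthful_greedy k : truthful_verif k (@M_greedy_small R U n).
Proof.
move=> i b ti bi _ _ _ hv.
move: hv; rewrite !greedyE.
set bL := upd b i bi; set bT := upd b i ti.
have hbL : forall j, j != i -> bL j = b j by move=> j hj; rewrite /bL upd_other.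
have hbT : forall j, j != i -> bT j = b j by move=> j hj; rewrite /bT upd_other.
have pwL : pairwise (@noconf U n) (foldl gstep [::] (sG bL)) by apply: foldl_pairwise.
have pwT : pairwise (@noconf U n) (foldl gstep [::] (sG bT)) by apply: foldl_pairwise.
case: (boolP (has (fun q : eb => q.1 == i) (foldl gstep [::] (sG bL)))) => hL; last first.
  by rewrite (alloc_of_none hL) => _; apply: ext_val_mono; exact: sub0set.
case/hasP: hL => -[pi S] hpL /= /eqP hpi; subst pi.
rewrite (alloc_of_mem pwL hpL) /= => hv.
have hpsL : (i, S) \in sG bL by have := foldl_sub hpL.
move: (hpsL); rewrite mem_sG mem_ebids /Kp /= /bL upd_same => /andP[hS /andP[hz hsmall]].
set z := bval bi S in hz.
have hz' : z <= ext_val ti S := le_trans (ext_val_ge hS (subxx S)) hv.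
case: (ext_val_attained ti S) => [->|[S' /andP[hS' hS'S] hext]].
  exact: ext_val_ge0.
rewrite hext; set v' := bval ti S'.
have hzv : z <= v' by rewrite /v' -hext.
suff [X hX hv'X] : exists2 X, (i, X) \in foldl gstep [::] (sG bT) & v' <= bval ti X.
  rewrite (alloc_of_mem pwT hX) /=; apply: (le_trans hv'X); apply: ext_val_ge => //.
  have := foldl_sub hX; rewrite /= mem_sG mem_ebids /bT upd_same => /andP[] //.
pose e' : eb := (i, S').
have he' : e' \in sG bT.
  rewrite mem_sG mem_ebids /Kp /= /bT upd_same hS' /= (lt_le_trans hz hzv) /=.
  rewrite /small /=; apply: leq_trans hsmall.
  by apply: leq_mul; apply: subset_leq_card.
have [s1 [s2 hsT]] : exists s1 s2, sG bT = s1 ++ e' :: s2.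
  by case/splitPr: he' => s1 s2; exists s1, s2.
have [l1 [l2 [hsL hall]]] : exists l1 l2, sG bL = l1 ++ (i, S) :: l2 /\
     all (@noconf U n ^~ (i, S)) (foldl gstep [::] l1).
  by case: (acc_mem hpL).
have sortT := sG_sorted bT; have sortL := sG_sorted bL.
have hs1 : s1 = [seq x <- sG bT | ~~ ebid_le bT e' x].
  rewrite hsT; apply: sorted_prefix.
  - exact: ebid_le_trans.
  - exact: ebid_le_refl.
  - exact: ebid_le_anti.
  - by rewrite -hsT.
  - by rewrite -hsT sG_uniq.
have hl1 : l1 = [seq x <- sG bL | ~~ ebid_le bL (i, S) x].
  rewrite hsL; apply: sorted_prefix.
  - exact: ebid_le_trans.
  - exact: ebid_le_refl.
  - exact: ebid_le_anti.
  - by rewrite -hsL.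
  - by rewrite -hsL sG_uniq.
case: (boolP (has (fun q : eb => q.1 == i) (foldl gstep [::] s1))) => hA.
  case/hasP: hA => -[qi X] hq /= /eqP hqi; subst qi.
  exists X.
    by rewrite hsT foldl_cat; apply: foldl_prefix.
  have hqs1 : (i, X) \in s1 by have := foldl_sub hq.
  have hle : ebid_le bT (i, X) e'.
    apply: (sorted_before (@ebid_le_trans _ _ _ bT) (s2 := s2)) hqs1.
    by rewrite -hsT.
  by have := ebid_le_val hle; rewrite /bidval /= /bT !upd_same.
exists S'; last exact: lexx.
rewrite hsT; apply: acc_intro; apply/allP => q hq.
have hqi : q.1 != i by move/hasPn: hA => /(_ q hq).
rewrite /noconf /= hqi /=.
set o := [seq e <- sG bT | e.1 != i].
have hoT : o = sort (ebid_le b) [seq e <- [seq e <- ebids b | e.1 != i] | Kp b e].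
  exact: others_sG.
have hoL : [seq e <- sG bL | e.1 != i] = o.
  by rewrite hoT; apply: others_sG.
have allT : all (fun p : eb => p.1 != i) (foldl gstep [::] s1).
  by apply/allP => y hy; exact: (hasPn hA y hy).
have allL : all (fun p : eb => p.1 != i) (foldl gstep [::] l1).
  by apply/allP => y hy; have := allP hall y hy; rewrite /noconf /= => /andP[].
rewrite (foldl_skip allT) in hq.
have fs1 : [seq e <- s1 | e.1 != i] = [seq x <- o | ~~ ebid_le bT e' x].
  by rewrite hs1 /o filter_swap.
have fl1 : [seq e <- l1 | e.1 != i] = [seq x <- o | ~~ ebid_le bL (i, S) x].
  by rewrite hl1 -hoL filter_swap.
have himp : {in o, forall x, ~~ ebid_le bT e' x -> ~~ ebid_le bL (i, S) x}.
  move=> x; rewrite mem_filter => /andP[hxi _]; apply: contra.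
  rewrite /ebid_le /= /bL /bT !upd_same !upd_other // -/z -/v'.
  have hix : (i == x.1) = false by rewrite eq_sym (negPf hxi).
  rewrite hix /= !orbF.
  move=> /orP[h|/andP[/eqP h h2]]; first by rewrite (lt_le_trans h hzv).
  rewrite -h h2 andbT; move: hzv; rewrite le_eqVlt => /orP[/eqP ->|hlt].
    by rewrite eqxx orbT.
  by rewrite hlt.
have [rest hrest] := filter_prefix (@ebid_le_trans _ _ _ bT)
   (sorted_filter (@ebid_le_trans _ _ _ bT) _ sortT) himp.
have hqL : q \in foldl gstep [::] l1.
  rewrite (foldl_skip allL) fl1 hrest foldl_cat; apply: foldl_prefix.
  by rewrite -fs1.
have := allP hall q hqL; rewrite /noconf /= => /andP[_ hd].
exact: disjointWr hS'S hd.
Qed.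

End TG.

Section TM.
Local Open Scope ring_scope.
Variables (R : rcfType) (U : finType) (n : nat).
Local Notation eb := (ebid U n).

Lemma maxE (b : profile R U n) i : M_max b i =
  match sorted_ebids b with [::] => set0 | e :: _ => if i == e.1 then e.2 else set0 end.
Proof. by rewrite /M_max; case: (sorted_ebids b). Qed.

Lemma mem_sorted_ebids (b : profile R U n) e : (e \in sorted_ebids b) = (e \in ebids b).
Proof. exact: mem_sort. Qed.

Lemma truthful_max k : truthful_verif k (@M_max R U n).
Proof.
move=> i b ti bi _ _ _.
rewrite !maxE.
set bL := upd b i bi; set bT := upd b i ti.
have mono : forall T, ext_val ti set0 <= ext_val ti T.
  by move=> T; apply: ext_val_mono; exact: sub0set.
case hsL : (sorted_ebids bL) => [|[pi S] sl] hv; first exact: mono.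
case: (eqVneq i pi) => /= hip; last exact: mono.
subst pi; rewrite /= eqxx in hv *.
have hpm : (i, S) \in ebids bL by rewrite -mem_sorted_ebids hsL mem_head.
move: hpm; rewrite mem_ebids /bL upd_same => hS.
set z := bval bi S.
have hz' : z <= ext_val ti S := le_trans (ext_val_ge hS (subxx S)) hv.
case: (ext_val_attained ti S) => [->|[S' /andP[hS' hS'S] hext]].
  exact: ext_val_ge0.
rewrite hext; set v' := bval ti S'.
have hzv : z <= v' by rewrite /v' -hext.
pose e' : eb := (i, S').
have he' : e' \in sorted_ebids bT by rewrite mem_sorted_ebids mem_ebids /bT upd_same.
have sortT : sorted (ebid_le bT) (sorted_ebids bT) by apply: sort_sorted; exact: ebid_le_total.
have sortL : sorted (ebid_le bL) (sorted_ebids bL) by apply: sort_sorted; exact: ebid_le_total.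
case hsT : (sorted_ebids bT) he' sortT => [//|[j X] st] he' sortT.
have hmin : ebid_le bT (j, X) e'.
  exact: (sorted_head_min (@ebid_le_trans _ _ _ bT) (@ebid_le_refl _ _ _ bT) sortT).
have hX : (j, X) \in ebids bT by rewrite -mem_sorted_ebids hsT mem_head.
case: (eqVneq i j) => /= hij.
  subst j; move: hX; rewrite mem_ebids /bT upd_same => hX.
  apply: le_trans (ext_val_ge hX (subxx X)).
  by have := ebid_le_val hmin; rewrite /bidval /= /bT upd_same.
exfalso.
have hXL : (j, X) \in ebids bL.
  by move: hX; rewrite !mem_ebids /bT /bL !upd_other // eq_sym.
have hminL : ebid_le bL (i, S) (j, X).
  rewrite hsL in sortL.
  apply: (sorted_head_min (@ebid_le_trans _ _ _ bL) (@ebid_le_refl _ _ _ bL) sortL).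
  by rewrite -hsL mem_sorted_ebids.
move: hmin hminL; rewrite /ebid_le /= /bT /bL !upd_same !upd_other ?(eq_sym j) //.
rewrite -/z -/v' (negPf hij) /= !orbF.
set w := bval (b j) X.
move=> /orP[h2|/andP[/eqP e2 h2]] /orP[h1|/andP[/eqP e1 h1]].
- by move: (lt_trans h2 h1); rewrite ltNge hzv.
- by move: h2; rewrite -e1 ltNge hzv.
- by move: h1; rewrite e2 ltNge hzv.
- by move: (ltn_trans h1 h2); rewrite ltnn.
Qed.

End TM.

Section Count.
Variables (U : finType) (n : nat).

Lemma sum_bool_card (P : pred 'I_n) : \sum_(i < n) (P i : nat) = #|P|.
Proof.
rewrite -sum1_card [RHS]big_mkcond /=; apply: eq_bigr => i _.
by rewrite unfold_in; case: (P i).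
Qed.

Lemma card_sub_sum (X A : {set U}) : A \subset X -> #|A| = \sum_(x in X) (x \in A : nat).
Proof.
move=> hAX; rewrite -sum1_card.
rewrite [RHS](bigID (fun x => x \in A)) /= [X in _ = _ + X]big1 ?addn0; last first.
  by move=> x /andP[_ /negPf ->].
apply: eq_big => [x|x ->//].
apply/idP/andP => [hx|[]//]; split => //; exact: (subsetP hAX).
Qed.

Lemma disjoint_family_sum (F : 'I_n -> {set U}) (X : {set U}) :
  (forall i j, i != j -> [disjoint F i & F j]) -> (forall i, F i \subset X) ->
  (\sum_(i < n) #|F i| <= #|X|)%N.
Proof.
move=> hdis hsub.
rewrite (eq_bigr (fun i => \sum_(x in X) (x \in F i : nat))); last first.
  by move=> i _; apply: card_sub_sum.
rewrite exchange_big /= -[X in (_ <= X)%N]sum1_card; apply: leq_sum => x _.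
rewrite (sum_bool_card (fun i => x \in F i)).
apply/card_le1P => i hi j /=; rewrite inE.
apply/idP/eqP => [hj|->//]; apply/eqP; apply: contraT => hne.
have hi' : x \in F i := hi; have hj' : x \in F j := hj.
by rewrite (disjointFr (hdis _ _ hne) hj') in hi'.
Qed.

Lemma count_meet (F : 'I_n -> {set U}) (X : {set U}) :
  (forall i j, i != j -> [disjoint F i & F j]) ->
  (#|[pred i | ~~ [disjoint X & F i]]| <= #|X|)%N.
Proof.
move=> hdis; apply: leq_trans (disjoint_family_sum (F := fun i => X :&: F i) _ _); last first.
- by move=> i; apply: subsetIl.
- move=> i j hij; apply: disjointWl (subsetIr X (F i)) _.
  by apply: disjointWr (subsetIr X (F j)) _; apply: hdis.
rewrite -(sum_bool_card [pred i | ~~ [disjoint X & F i]]); apply: leq_sum => i _ /=.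
case: (boolP [disjoint X & F i]) => //= h.
by rewrite card_gt0; apply: contra h => /eqP h0; rewrite -setI_eq0 h0.
Qed.

End Count.

Section Approx.
Local Open Scope ring_scope.
Variables (R : rcfType) (U : finType) (n k : nat) (t : profile R U n).
Hypothesis hval : forall i, valid_type k (t i).
Local Notation eb := (ebid U n).
Local Notation gstep := (@greedy_step U n).

Definition Acc := foldl gstep [::] (sG t).
Definition Gv := \sum_(p <- Acc) bidval t p.
Definition vmax := if sorted_ebids t is h :: _ then bidval t h else 0.

Lemma val_ge0 e : e \in ebids t -> 0 <= bidval t e.
Proof.
case: e => i X; rewrite mem_ebids => hX.
by have [_ [_ h]] := hval i; exact: h.
Qed.

Lemma Acc_sub p : p \in Acc -> (p \in ebids t) && Kp t p.
Proof. by move=> hp; have := foldl_sub hp; rewrite /= mem_sG. Qed.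

Lemma Acc_val_ge0 p : p \in Acc -> 0 <= bidval t p.
Proof. by move/Acc_sub => /andP[h _]; exact: val_ge0. Qed.

Lemma Gv_ge0 : 0 <= Gv.
Proof. by rewrite /Gv big_seq; apply: sumr_ge0 => p; apply: Acc_val_ge0. Qed.

Lemma vmax_ge e : e \in ebids t -> bidval t e <= vmax.
Proof.
rewrite -mem_sorted_ebids /vmax.
have : sorted (ebid_le t) (sorted_ebids t) by apply: sort_sorted; exact: ebid_le_total.
case: (sorted_ebids t) => [//|h s] hs he.
apply: ebid_le_val.
exact: (sorted_head_min (@ebid_le_trans _ _ _ t) (@ebid_le_refl _ _ _ t) hs).
Qed.

Lemma vmax_ge0 : 0 <= vmax.
Proof.
rewrite /vmax; have : forall e, e \in sorted_ebids t -> e \in ebids t.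
  by move=> e; rewrite mem_sorted_ebids.
case: (sorted_ebids t) => [//|h s] hm; apply: val_ge0; apply: hm; exact: mem_head.
Qed.

Lemma welfare_ge0 a : 0 <= welfare t a.
Proof. by apply: sumr_ge0 => i _; exact: ext_val_ge0. Qed.

Lemma vmax_le_welfare : vmax <= welfare t (M_max t).
Proof.
rewrite /vmax /welfare.
have : forall e, e \in sorted_ebids t -> e \in ebids t.
  by move=> e; rewrite mem_sorted_ebids.
under eq_bigr do rewrite maxE.
case: (sorted_ebids t) => [|[j X] s] hm.
  by apply: sumr_ge0 => i _; exact: ext_val_ge0.
rewrite (bigD1 j) //= eqxx.
have hX : X \in bcoll (t j) by rewrite -mem_ebids; apply: hm; exact: mem_head.
apply: le_trans (ext_val_ge hX (subxx X)) _.
rewrite lerDl; apply: sumr_ge0 => i _; exact: ext_val_ge0.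
Qed.

Lemma filter_bidder (L : seq eb) p : pairwise (@noconf U n) L -> p \in L ->
  [seq q <- L | q.1 == p.1] = [:: p].
Proof.
elim: L => //= x L IH /andP[hx hpw]; rewrite inE.
case: (eqVneq p x) => [e _|hne /= hp].
  rewrite e eqxx filter_nil_all //; apply/allP => y /(allP hx).
  by rewrite /noconf => /andP[hh _] /=; rewrite eq_sym.
have /andP[hxp _] := allP hx p hp; rewrite (negPf hxp); exact: IH.
Qed.

Lemma Gv_le_welfare : Gv <= welfare t (M_greedy_small t).
Proof.
rewrite /Gv /welfare greedyE -/Acc.
have pw : pairwise (@noconf U n) Acc by apply: foldl_pairwise.
have -> : \sum_(p <- Acc) bidval t p = \sum_(i < n) \sum_(p <- Acc | p.1 == i) bidval t p.
  rewrite (exchange_big_dep xpredT) //=; apply: eq_bigr => p _.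
  by rewrite (eq_bigl (fun i => i == p.1)) ?big_pred1_eq // => i; rewrite eq_sym.
apply: ler_sum => i _.
case: (boolP (has (fun q : eb => q.1 == i) Acc)) => hh.
  case/hasP: hh => -[j X] hp /= /eqP hj; subst j.
  rewrite -big_filter (filter_bidder pw hp) big_seq1 (alloc_of_mem pw hp) /=.
  apply: ext_val_ge (subxx X).
  by have := Acc_sub hp; rewrite mem_ebids => /andP[].
by rewrite big_hasC //; exact: ext_val_ge0.
Qed.

Lemma sum_ge_elem (r : seq eb) (P : pred eb) (F : eb -> R) x :
  x \in r -> P x -> (forall y, y \in r -> 0 <= F y) ->
  F x <= \sum_(y <- r | P y) F y.
Proof.
elim: r => //= y r IH; rewrite inE big_cons => /orP[/eqP <-|hx] hP h0.
  rewrite hP lerDl big_seq_cond; apply: sumr_ge0 => z /andP[hz _].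
  by apply: h0; rewrite inE hz orbT.
have h0' : forall z, z \in r -> 0 <= F z by move=> z hz; apply: h0; rewrite inE hz orbT.
case: ifP => _; last exact: IH.
rewrite -[F x]add0r; apply: lerD; [apply: h0; exact: mem_head| exact: IH].
Qed.

Lemma sum_conf_ge0 (P : pred eb) : 0 <= \sum_(p <- Acc | P p) bidval t p.
Proof. by rewrite big_seq_cond; apply: sumr_ge0 => p /andP[hp _]; apply: Acc_val_ge0. Qed.

Definition Sa (a : allocation U n) i :=
  odflt set0 [pick S | (S \in bcoll (t i)) && (S \subset a i) &&
                        (ext_val (t i) (a i) == bval (t i) S)].

Lemma Sa_sub a i : Sa a i \subset a i.
Proof.
rewrite /Sa; case: pickP => [S /andP[/andP[_ h] _]|_] //=; exact: sub0set.
Qed.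

Lemma Sa_spec a i : ext_val (t i) (a i) = 0 \/
  (Sa a i \in bcoll (t i) /\ ext_val (t i) (a i) = bval (t i) (Sa a i)).
Proof.
rewrite /Sa; case: pickP => [S /andP[/andP[h1 _] /eqP h3]|hn] /=; first by right.
case: (ext_val_attained (t i) (a i)) => [->|[S /andP[h1 h2] h3]]; first by left.
by move: (hn S); rewrite h1 h2 h3 eqxx.
Qed.

Lemma Sa_disj a i j : feasible a -> i != j -> [disjoint Sa a i & Sa a j].
Proof.
move=> /forallP /(_ i) /forallP /(_ j) /implyP h hij.
apply: disjointWl (Sa_sub a i) _; apply: disjointWr (Sa_sub a j) _; exact: h.
Qed.

Lemma per_i a i : ext_val (t i) (a i) <=
  (if ~~ small (i, Sa a i) then vmax else 0) +
  \sum_(p <- Acc | ~~ noconf p (i, Sa a i)) bidval t p.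
Proof.
have rhs0 : 0 <= (if ~~ small (i, Sa a i) then vmax else 0) +
  \sum_(p <- Acc | ~~ noconf p (i, Sa a i)) bidval t p.
  by apply: addr_ge0; [case: ifP => // _; exact: vmax_ge0 | exact: sum_conf_ge0].
case: (Sa_spec a i) => [->//|[hS ->]].
have he : (i, Sa a i) \in ebids t by rewrite mem_ebids.
case: (boolP (small (i, Sa a i))) => hs /=; last first.
  apply: le_trans (vmax_ge he) _; rewrite lerDl; exact: sum_conf_ge0.
rewrite add0r; case: (lerP (bval (t i) (Sa a i)) 0) => hpos.
  apply: le_trans hpos _; exact: sum_conf_ge0.
have hsG : (i, Sa a i) \in sG t by rewrite mem_sG he /Kp /= hpos hs.
have [p hp /andP[hc hle]] := charging (@ebid_le_trans _ _ _ t) (@ebid_le_refl _ _ _ t)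
   (sG_sorted t) (acc := [::]) (fun q x (hq : q \in [::]) _ => ltac:(by [])) hsG.
apply: le_trans (ebid_le_val hle) _.
apply: sum_ge_elem => //; exact: Acc_val_ge0.
Qed.

Lemma sum_const_pred (P : pred 'I_n) (x : R) : \sum_(i < n | P i) x = x *+ #|P|.
Proof. by rewrite -sumr_const. Qed.

Local Notation sq := (Num.sqrt (#|U|%:R : R)).

Lemma sq_ge0 : 0 <= sq.
Proof. exact: sqrtr_ge0. Qed.

Lemma sq_sq : sq * sq = #|U|%:R.
Proof. by rewrite -expr2 sqr_sqrtr // ler0n. Qed.

Lemma card_le_sqrt (X : {set U}) : (#|X| * #|X| <= #|U|)%N -> (#|X|%:R : R) <= sq.
Proof.
move=> h; rewrite -[X in X <= _](@ger0_norm _ (#|X|%:R : R)) ?ler0n //.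
rewrite -sqrtr_sqr ler_sqrt ?ler0n // expr2 -natrM ler_nat //.
Qed.

Lemma card_gt_sqrt (X : {set U}) : (#|U| < #|X| * #|X|)%N -> sq < (#|X|%:R : R).
Proof.
move=> h; rewrite -[X in _ < X](@ger0_norm _ (#|X|%:R : R)) ?ler0n //.
rewrite -sqrtr_sqr ltr_sqrt ?expr2 -?natrM ?ltr_nat //.
by rewrite ltr0n; apply: leq_ltn_trans h.
Qed.

Lemma conf_count a p : p \in Acc -> (forall i j, i != j -> [disjoint Sa a i & Sa a j]) ->
  (#|[pred i | ~~ noconf p (i, Sa a i)]|%:R : R) <= sq + 1.
Proof.
move=> hp hdis.
have hsm : small p by have /andP[_ /andP[_ h]] := Acc_sub hp.
have h1 : (#|[pred i | ~~ noconf p (i, Sa a i)]| <= 1 + #|p.2|)%N.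
  apply: leq_trans (_ : #|[predU pred1 p.1 & [pred i | ~~ [disjoint p.2 & Sa a i]]]| <= _)%N.
    apply: subset_leq_card; apply/subsetP => i; rewrite !inE /noconf /= negb_and negbK.
    by rewrite eq_sym.
  have e := cardUI (pred1 p.1) [pred i | ~~ [disjoint p.2 & Sa a i]].
  rewrite card1 in e.
  apply: leq_trans (leq_addr #|[predI pred1 p.1 & [pred i | ~~ [disjoint p.2 & Sa a i]]]| _) _.
  rewrite e leq_add2l; exact: count_meet.
apply: le_trans (_ : ((1 + #|p.2|)%N%:R : R) <= _); first by rewrite ler_nat.
by rewrite natrD addrC lerD2r; apply: card_le_sqrt.
Qed.

Lemma nra_aux (c s : R) : 0 <= s -> 0 <= c -> c * s <= s * s -> c <= s * s -> c <= s + 1.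
Proof. move=> *; nra. Qed.

Lemma large_count a : (forall i j, i != j -> [disjoint Sa a i & Sa a j]) ->
  (#|[pred i | ~~ small (i, Sa a i)]|%:R : R) <= sq + 1.
Proof.
move=> hdis.
set L := [pred i | ~~ small (i, Sa a i)].
have hsum : (\sum_(i < n | L i) #|Sa a i| <= #|U|)%N.
  apply: leq_trans (_ : \sum_(i < n) #|Sa a i| <= _)%N.
    rewrite [X in (_ <= X)%N](bigID L) /=; apply: leq_addr.
  rewrite -cardsT; apply: disjoint_family_sum => [i j hij|i]; [exact: hdis | exact: subsetT].
have hc : (#|L| <= \sum_(i < n | L i) #|Sa a i|)%N.
  rewrite -sum1_card; apply: leq_sum => i; rewrite /L inE /small /= -ltnNge.
  by case: #|Sa a i|.
have hcs : (#|L|%:R : R) * sq <= #|U|%:R.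
  rewrite mulr_natl -sum_const_pred.
  apply: le_trans (_ : \sum_(i < n | L i) (#|Sa a i|%:R : R) <= _).
    apply: ler_sum => i hi; apply: ltW; apply: card_gt_sqrt.
    by move: hi; rewrite /L /small /= -ltnNge.
  by rewrite -natr_sum ler_nat.
have hcm : (#|L|%:R : R) <= #|U|%:R by rewrite ler_nat (leq_trans hc hsum).
have hcs' : (#|L|%:R : R) * sq <= sq * sq by rewrite sq_sq.
have hcm' : (#|L|%:R : R) <= sq * sq by rewrite sq_sq.
exact: nra_aux sq_ge0 (ler0n _ _) hcs' hcm'.
Qed.

Lemma welfare_bound (a : allocation U n) : feasible a ->
  welfare t a <= (sq + 1) * (vmax + Gv).
Proof.
move=> hf.
have hdis : forall i j, i != j -> [disjoint Sa a i & Sa a j].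
  by move=> i j; apply: Sa_disj.
rewrite /welfare.
apply: le_trans; first by apply: ler_sum => i _; exact: per_i.
rewrite big_split /= -big_mkcond sum_const_pred.
rewrite (exchange_big_dep xpredT) //=.
have -> : (sq + 1) * (vmax + Gv) = vmax * (sq + 1) + Gv * (sq + 1) by ring.
apply: lerD.
  rewrite -[vmax *+ _]mulr_natr; apply: ler_wpM2l; [exact: vmax_ge0 | exact: (large_count hdis)].
rewrite /Gv mulr_suml big_seq_cond [X in _ <= X]big_seq_cond.
apply: ler_sum => p /andP[hp _].
rewrite (eq_bigl [pred i | ~~ noconf p (i, Sa a i)]) // sum_const_pred -[bidval t p *+ _]mulr_natr.
apply: ler_wpM2l; [exact: Acc_val_ge0 | exact: conf_count].
Qed.

Lemma opt_bound : OPT t <= (sq + 1) * (vmax + Gv).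
Proof.
apply: bigmax_le.
  apply: mulr_ge0; first by apply: addr_ge0 => //; exact: sq_ge0.
  apply: addr_ge0; [exact: vmax_ge0 | exact: Gv_ge0].
move=> a ha; exact: welfare_bound.
Qed.

End Approx.

Local Open Scope ring_scope.

Theorem theorem10 (R : rcfType) (U : finType) (n k : nat) :
  universally_truthful k (RandPoly R U n) /\
  (forall t : profile R U n, (forall i, valid_type k (t i)) ->
     OPT t / (2 * (Num.sqrt (#|U|%:R) + 1)) <= expected_welfare (RandPoly R U n) t).
Proof.
split.
  split.
    split.
      by move=> p; rewrite !inE => /orP[/eqP ->|/eqP ->]; rewrite invr_ge0 ler0n.
    by rewrite /= !big_cons big_nil; field.
  move=> pM /= [<-|[<-|[]]] /=; [exact: truthful_max | exact: truthful_greedy].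
move=> t hv.
rewrite /expected_welfare !big_cons big_nil /=.
have h1 := opt_bound hv.
have h2 : vmax t <= welfare t (M_max t) by apply: vmax_le_welfare.
have h3 : Gv t <= welfare t (M_greedy_small t) by apply: Gv_le_welfare.
have h4 : 0 <= vmax t by apply: vmax_ge0 hv.
have h5 : 0 <= Gv t by apply: Gv_ge0 hv.
have h6 : 0 <= Num.sqrt (#|U|%:R : R) := sqrtr_ge0 _.
rewrite ler_pdivrMr; last by nra.
apply: le_trans h1 _.
nra.
Qed.
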